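(* Let $G$ be a finite connected multigraph without self-loops with a boundary vertex $\partial$, where both orientations of each edge $e$ carry the same nonnegative weight $U_e$, and the collection of weights of the unoriented edges $(U_e)_{e\in E}$ is generic. Perform the CLEB walk from a vertex $x\neq\partial$, and let $S_t$ be the set of oriented edges exposed by it up to step $t$. Let $\tau_1=1$ and, inductively for $k\ge2$, let $\tau_k$ be the smallest $t>\tau_{k-1}$ such that the oriented edge revealed by the CLEB walk at step $t$ has a reversal that was not exposed before step $t$. Let $\bar S_{\tau_k}$ be the set of unoriented edges one of whose orientations lies in $S_{\tau_k}$. Let $(T_k)_{k\ge1}$ be the invasion percolation process started at $x$. Then $\bar S_{\tau_k}=T_k$ for every $k$ for which $\tau_k$ is defined.
   Context: Weights $(W_x)_{x\in N}$ are generic if $\sum_{x\in S}n_xW_x\neq0$ for every finite $S$ and integers $n_x$ not all zero. Invasion percolation started at $x$: $T_1$ is the edge of smallest weight incident to $x$; given the tree $T_k$, $T_{k+1}$ is $T_k$ together with the edge of smallest weight among edges with exactly one endpoint in (the vertex set of) $T_k$. Contraction of an oriented cycle $C$: remove the vertices of $C$ and all oriented edges with both endpoints in $C$, add a new vertex $v_C$, and replace each oriented edge with exactly one endpoint in $C$ by the edge with that endpoint replaced by $v_C$; edges of contracted graphs are identified with edges of $G$. CLEB walk from $x$: set $G_0=G$, $U_0$ the given weights of oriented edges, $S_0=\emptyset$, $P_0$ the empty path at $x$, current vertex $v_1=x$. At step $j\ge1$, subtract $\pi=\min$ of the current weights over the outgoing edges of $v_j$ in $G_{j-1}$ from the weights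 of all those outgoing edges, and let $\vec e$ be the unique outgoing edge of $v_j$ now of weight $0$; $S_j=S_{j-1}\cup\{\vec e\}$ ($\vec e$ is said to be revealed/exposed at step $j$). If $\vec e_+$ is not on the path $P_{j-1}$: $G_j=G_{j-1}$, $P_j=P_{j-1}$ extended by $\vec e$, $v_{j+1}=\vec e_+$, and stop if $\vec e_+=\partial$. If $\vec e_+$ is a vertex $y$ of $P_{j-1}$: contract the cycle formed by the part of $P_{j-1}$ from $y$ to $v_j$ together with $\vec e$ to obtain $G_j$ (with the current modified weights), let $P_j$ be $P_{j-1}$ truncated at $y$ (now ending at the new vertex $v_C$), and $v_{j+1}=v_C$. *)

(* Defs.v *)
From mathcomp Require Import all_boot all_order all_algebra.
Set Implicit Arguments. Unset Strict Implicit. Unset Printing Implicit Defensive.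
Import Order.TTheory GRing.Theory Num.Theory.
Local Open Scope ring_scope.

Section Graph.
Variables (V E : finType) (ends : E -> V * V).

Definition oedge := (E * bool)%type.
Definition otail (a : oedge) : V := if a.2 then (ends a.1).1 else (ends a.1).2.
Definition ohead (a : oedge) : V := if a.2 then (ends a.1).2 else (ends a.1).1.
Definition orev (a : oedge) : oedge := (a.1, ~~ a.2).

Definition no_self_loops := forall e, (ends e).1 != (ends e).2.
Definition adjacent : rel V :=
  fun u v => [exists e, (ends e == (u, v)) || (ends e == (v, u))].
Definition connected_graph := forall u v, connect adjacent u v.
End Graph.

(* Genericity: no nontrivial integer combination of the weights vanishes
   (E is finite, so finite subsets S with coefficients n_x amount to
   integer vectors indexed by E). *)
Definition generic (R : nzRingType) (E : finType) (U : E -> R) :=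
  forall n : {ffun E -> int}, n != 0 -> \sum_(e : E) U e *~ n e != 0.

(* Invasion percolation started at x. invasion 0 = empty tree (vertex set
   {x}); invasion k = T_k for k >= 1 (None if undefined). *)
Section Invasion.
Variables (R : realFieldType) (V E : finType) (ends : E -> V * V)
  (U : E -> R) (x : V).

Definition ip_vertices (T : {set E}) : {set V} :=
  x |: \bigcup_(e in T) [set (ends e).1; (ends e).2].
Definition ip_boundary (T : {set E}) : {set E} :=
  [set e | ((ends e).1 \in ip_vertices T) != ((ends e).2 \in ip_vertices T)].
Definition ip_next (T : {set E}) : option E :=
  [pick e in ip_boundary T | [forall f in ip_boundary T, U e <= U f]].
Fixpoint invasion (k : nat) : option {set E} :=
  match k with
  | 0 => Some set0
  | k'.+1 => obind (fun T => omap (fun e => e |: T) (ip_next T)) (invasion k')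
  end.
End Invasion.

(* A vertex of a contracted graph G_j is represented by the
   block of original vertices contracted into it; the vertices of G_j form
   the partition cs_blocks of V, and the oriented edges of G_j are exactly
   the oriented edges of G whose endpoints lie in different blocks. *)
Section CLEB.
Variables (R : realFieldType) (V E : finType) (ends : E -> V * V)
  (U : E -> R) (bd x : V).

Record cleb_state := ClebState {
  cs_blocks : {set {set V}};
  cs_w : oedge E -> R;
  cs_path : seq {set V};          (* vertices of the path P_j (last = current vertex) *)
  cs_stopped : bool }.

Definition cleb_init : cleb_state :=
  ClebState [set [set v] | v : V] (fun a => U a.1) [:: [set x]] false.

Definition cleb_step (s : cleb_state) : option (oedge E * cleb_state) :=
  if cs_stopped s then None else
  let B := last set0 (cs_path s) in
  let out := [set a : oedge E | (otail ends a \in B) && (ohead ends a \notin B)] in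
  match [pick a in out | [forall b in out, cs_w s a <= cs_w s b]] with
  | None => None
  | Some a0 =>
    let pi := cs_w s a0 in
    let w' := fun a => if a \in out then cs_w s a - pi else cs_w s a in
    match [pick a in out | w' a == 0] with
    | None => None
    | Some e =>
      let H := pblock (cs_blocks s) (ohead ends e) in
      if H \in cs_path s then
        let i := index H (cs_path s) in
        let C := drop i (cs_path s) in
        let vC := \bigcup_(b <- C) b in
        Some (e, ClebState ((cs_blocks s :\: [set b in C]) :|: [set vC]) w'
                   (rcons (take i (cs_path s)) vC) false)
      else Some (e, ClebState (cs_blocks s) w' (rcons (cs_path s) H) (bd \in H))
    end
  end.

Fixpoint cleb_run (n : nat) : option cleb_state :=
  match n with
  | 0 => Some cleb_init
  | n'.+1 => obind (fun s => omap snd (cleb_step s)) (cleb_run n')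
  end.

Definition revealed (j : nat) : option (oedge E) :=
  match j with
  | 0 => None
  | j'.+1 => obind (fun s => omap fst (cleb_step s)) (cleb_run j')
  end.

Definition exposed (t : nat) : {set oedge E} :=
  [set a | has (fun j => revealed j == Some a) (iota 1 t)].

Definition Sbar (t : nat) : {set E} :=
  [set e | ((e, true) \in exposed t) || ((e, false) \in exposed t)].

Definition is_new (t : nat) : bool :=
  if revealed t is Some a then orev a \notin exposed t.-1 else false.

Definition tau_time (t : nat) : bool := (t == 1%N) || ((1 < t)%N && is_new t).

Definition tau_at (k t : nat) : bool :=
  tau_time t && (count tau_time (iota 1 t) == k).
End CLEB.

(* Main.v *)
Require Import Defs.
From mathcomp Require Import all_boot all_order all_algebra.
Set Implicit Arguments. Unset Strict Implicit. Unset Printing Implicit Defensive.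
Import Order.TTheory GRing.Theory Num.Theory.

Section Proof.
Variables (R : realFieldType) (V E : finType) (ends : E -> V * V) (U : E -> R) (bd x : V).

Definition outB (B : {set V}) : {set oedge E} :=
  [set a : oedge E | (otail ends a \in B) && (Defs.ohead ends a \notin B)].

Lemma step_spec (s s' : cleb_state R V E) a c :
  (forall b, b \in outB (last set0 (cs_path s)) -> cs_w s b = (U b.1 - c)%R) ->
  cleb_step ends bd s = Some (a, s') ->
  let B := last set0 (cs_path s) in
  [/\ cs_stopped s = false, a \in outB B, (forall b, b \in outB B -> (U a.1 <= U b.1)%R),
   (forall b, cs_w s' b = if b \in outB B then (cs_w s b - (U a.1 - c))%R else cs_w s b) &
   (let H := pblock (cs_blocks s) (Defs.ohead ends a) in
    if H \in cs_path s then
      let i := index H (cs_path s) in let C := drop i (cs_path s) in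
      let vC := \bigcup_(b <- C) b in
      [/\ cs_blocks s' = (cs_blocks s :\: [set b in C]) :|: [set vC],
          cs_path s' = rcons (take i (cs_path s)) vC & cs_stopped s' = false]
    else [/\ cs_blocks s' = cs_blocks s, cs_path s' = rcons (cs_path s) H &
             cs_stopped s' = (bd \in H)])].
Proof.
move=> hw; rewrite /cleb_step.
case: (cs_stopped s) => //.
case: pickP => [a0 /andP[a0o /forall_inP a0m]|] //.
case: pickP => [e /andP[eo]|] //.
rewrite eo subr_eq0 => /eqP ew.
have hwo := hw; rewrite -/(outB _) in a0o eo a0m *.
rewrite hw // hw // in ew; move/(congr1 (fun z => (z + c)%R)): ew; rewrite !subrK => ew.
have hmin : forall b, b \in outB (last set0 (cs_path s)) -> (U e.1 <= U b.1)%R.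
  by move=> b hb; have := a0m b hb; rewrite hw // hw // lerD2r ew.
have hw' : forall b, (if b \in outB (last set0 (cs_path s)) then (cs_w s b - cs_w s a0)%R else cs_w s b) =
   (if b \in outB (last set0 (cs_path s)) then (cs_w s b - (U e.1 - c))%R else cs_w s b).
  by move=> b; case: ifP => // _; rewrite (hw a0) // ew.
case: ifP => hH [<- <-] /=; split => //; rewrite hH //.
Qed.

Local Notation oh := (Defs.ohead ends).
Local Notation ot := (otail ends).

Lemma ot_rev a : ot (orev a) = oh a.
Proof. by case: a => e []. Qed.
Lemma oh_rev a : oh (orev a) = ot a.
Proof. by case: a => e []. Qed.

Definition WP (P : seq {set V}) : {set V} := [set v | has (fun B : {set V} => v \in B) P].

Lemma inWP P v : reflect (exists2 i, (i < size P)%N & v \in nth set0 P i) (v \in WP P).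
Proof. by rewrite inE; apply: (iffP (has_nthP set0)). Qed.

Definition Pok (P : seq {set V}) :=
  [/\ (forall i j, (i < size P)%N -> (j < size P)%N -> i != j ->
         [disjoint nth set0 P i & nth set0 P j]) &
      (forall i, (i < size P)%N -> nth set0 P i != set0)].

Lemma Pok_same P i j v : Pok P -> (i < size P)%N -> (j < size P)%N ->
  v \in nth set0 P i -> v \in nth set0 P j -> i = j.
Proof.
case=> hd _ hi hj vi vj; apply/eqP; apply: contraTT isT => hij.
by have := hd _ _ hi hj hij => /disjointFl/(_ vj); rewrite vi.
Qed.

Lemma Pok_uniq P : Pok P -> uniq P.
Proof.
move=> hP; have [hd hne] := hP.
apply/(uniqPn set0) => -[i [j [hij hjs he]]].
have his : (i < size P)%N by apply: ltn_trans hjs.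
have /set0Pn [v hv] := hne i his.
have hv' : v \in nth set0 P j by rewrite -he.
by have := Pok_same hP his hjs hv hv' => eij; rewrite eij ltnn in hij.
Qed.

Lemma pblock_char (P : {set {set V}}) B v : B \in P -> v \in B ->
  (forall B', B' \in P -> v \in B' -> B' = B) -> pblock P v = B.
Proof.
move=> hB hv hu; rewrite /pblock; case: pickP => [B' /andP[h1 h2]|/(_ B)] /=.
  by apply: hu.
by rewrite hB hv.
Qed.


Variable e0 : oedge E.
Hypothesis Uinj : injective U.

Definition ESok (P : seq {set V}) (es : seq (oedge E)) (ex : {set oedge E}) (w : oedge E -> R) :=
 [/\ size es = (size P).-1,
   (forall j, (j < size es)%N ->
      [/\ ot (nth e0 es j) \in nth set0 P j, oh (nth e0 es j) \in nth set0 P j.+1,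
          nth e0 es j \in ex,
          (forall b, b \in outB (nth set0 P j) -> (U (nth e0 es j).1 <= U b.1)%R) &
          (forall b, b \in outB (nth set0 P j) -> w b = (U b.1 - U (nth e0 es j).1)%R)]),
   (forall j j', (j < j')%N -> (j' < size es)%N -> (U (nth e0 es j').1 < U (nth e0 es j).1)%R) &
   exists c, forall b, b \in outB (last set0 P) -> w b = (U b.1 - c)%R ].

Lemma back_edge P es ex w a i : Pok P -> ESok P es ex w ->
  a \in outB (last set0 P) -> (forall b, b \in outB (last set0 P) -> (U a.1 <= U b.1)%R) ->
  (i < size P)%N -> oh a \in nth set0 P i -> size P = i.+2 /\ a = orev (nth e0 es i).
Proof.
move=> hP [hse hes hdec _] ha hmin hi hai.
have hP0 : (0 < size P)%N by apply: leq_ltn_trans hi.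
set m := (size P).-1.
have hm : size P = m.+1 by rewrite /m prednK.
have hlast : last set0 P = nth set0 P m by rewrite -nth_last.
rewrite hlast inE in ha; case/andP: ha => hta hha.
have him : i != m by apply: contraNneq hha => <-.
have him' : (i < m)%N by rewrite ltn_neqAle him -ltnS -hm hi.
have [j hm1] : exists j, m = j.+1 by exists m.-1; rewrite prednK // (leq_ltn_trans _ him').
have hj : (j < size es)%N by rewrite hse -/m hm1 ltnSn.
have [hjt hjh _ hjmin _] := hes j hj.
rewrite -hm1 in hjh.
have hjP : (j < size P)%N by rewrite hm hm1 ltnS leqW.
have hmP : (m < size P)%N by rewrite hm.
have hjm : j != m by rewrite hm1 neq_ltn ltnSn.
have r1 : orev (nth e0 es j) \in outB (last set0 P).
  rewrite hlast inE ot_rev oh_rev hjh /=.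
  by apply/negP => hin; move/eqP: hjm; apply; apply: (Pok_same hP hjP hmP hjt hin).
have l1 := hmin _ r1; rewrite /= in l1.
have hiP := hi.
have r2 : orev a \in outB (nth set0 P i).
  rewrite inE ot_rev oh_rev hai /=.
  by apply/negP => hin; move/eqP: him; apply; apply: (Pok_same hP hiP hmP hin hta).
have hie : (i < size es)%N by rewrite hse -/m.
have [_ _ _ himin _] := hes i hie.
have l2 := himin _ r2; rewrite /= in l2.
have hij : i = j.
  apply/eqP; rewrite eqn_leq -ltnS -hm1 him' /=; rewrite leqNgt; apply/negP => hlt.
  have := hdec _ _ hlt hj => l3.
  by have := lt_le_trans l3 (le_trans l2 l1); rewrite ltxx.
subst i; split; first by rewrite hm hm1.
have he : a.1 = (nth e0 es j).1 by apply: Uinj; apply/eqP; rewrite eq_le l1 l2.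
clear hmin r2 l1 l2 hai hha; move: hta hjt he; case: a => e b; case: (nth e0 es j) => e' b' /= hta hjt he; subst e'.
rewrite /orev /=; congr pair; case: b b' hta hjt => -[] //= hta hjt;
  by move/eqP: hjm; case; apply: (Pok_same hP hjP hmP hjt hta).
Qed.


Local Notation run := (cleb_run ends U bd x).
Local Notation rev := (revealed ends U bd x).
Local Notation expo := (exposed ends U bd x).
Local Notation Sb := (Sbar ends U bd x).
Local Notation tau := (tau_time ends U bd x).

Lemma run_step t s a s' : run t = Some s -> cleb_step ends bd s = Some (a, s') ->
  rev t.+1 = Some a /\ run t.+1 = Some s'.
Proof. by move=> h1 h2; rewrite /= h1 /= h2. Qed.

Lemma run_inv t s' : run t.+1 = Some s' ->
  exists s a, run t = Some s /\ cleb_step ends bd s = Some (a, s').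
Proof.
move=> /=; case: (run t) => [s|] //=; case h: (cleb_step ends bd s) => [[a s'']|] //= [<-].
by exists s, a.
Qed.

Lemma exposed0 : expo 0 = set0.
Proof. by apply/setP => b; rewrite !inE. Qed.

Lemma iotaS1 t : iota 1 t.+1 = iota 1 t ++ [:: t.+1].
Proof. by rewrite -(addn1 t) iotaD addnC. Qed.

Lemma exposedS t a : rev t.+1 = Some a -> expo t.+1 = a |: expo t.
Proof.
move=> h; apply/setP => b; rewrite /exposed !inE iotaS1 has_cat has_seq1 h.
by rewrite orbC; congr orb; apply/eqP/eqP => [[]|->].
Qed.

Lemma SbarS t a : rev t.+1 = Some a -> Sb t.+1 = a.1 |: Sb t.
Proof.
move=> h; apply/setP => e; rewrite /Sbar (exposedS h) !inE.
case: a {h} => e' [] /=; rewrite !xpair_eqE /=.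
- by case: (e == e'); rewrite /= ?orbT ?orbF.
- by case: (e == e'); rewrite /= ?orbT ?orbF.
Qed.

Lemma countS t : count tau (iota 1 t.+1) = (count tau (iota 1 t) + tau t.+1)%N.
Proof. by rewrite iotaS1 count_cat /= addn0. Qed.

Lemma WP_rcons P B : WP (rcons P B) = WP P :|: B.
Proof. by apply/setP => v; rewrite !inE has_rcons orbC. Qed.

Lemma inWP_mem (P : seq {set V}) B v : B \in P -> v \in B -> v \in WP P.
Proof. by move=> hB hv; rewrite inE; apply/hasP; exists B. Qed.

Lemma ipv_add T e : ip_vertices ends x (e |: T) = ip_vertices ends x T :|: [set (ends e).1; (ends e).2].
Proof.
apply/setP => v; rewrite !inE; apply/idP/idP.
- case/orP => [->//|/bigcupP [f]]; rewrite !inE => /orP [/eqP ->|hf] hv.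
    by case/orP: hv => ->; rewrite !orbT.
  apply/orP; left. apply/orP; right. apply/bigcupP. exists f => //. by rewrite !inE.
- case/orP => [/orP [->//|/bigcupP [f hf hv]]|hv].
    by apply/orP; right; apply/bigcupP; exists f; rewrite // !inE hf orbT.
  by apply/orP; right; apply/bigcupP; exists e; rewrite !inE ?eqxx.
Qed.

Lemma ends_o a : [set (ends a.1).1; (ends a.1).2] = [set ot a; oh a].
Proof. by case: a => e [] //=; rewrite setUC. Qed.

Definition Inv (s : cleb_state R V E) (t : nat) :=
 let P := cs_path s in let W := WP P in
 [/\ invasion ends U x (count tau (iota 1 t)) = Some (Sb t),
     ip_vertices ends x (Sb t) = W,
     (forall a, a \in expo t -> (ot a \in W) && (oh a \in W)),
     (0 < size P)%N /\ Pok P &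
  [/\ (forall B, (B \in cs_blocks s) = (B \in P) || [exists v, (v \notin W) && (B == [set v])]),
     (exists es, ESok P es (expo t) (cs_w s)) &
     (forall a, ot a \notin W -> cs_w s a = U a.1)]].

Lemma Inv0 : Inv (cleb_init U x) 0.
Proof.
have hS : Sb 0 = set0 by apply/setP => e; rewrite /Sbar exposed0 !inE.
have hW : WP [:: [set x]] = [set x] by apply/setP => v; rewrite !inE /= ?orbF ?inE.
rewrite /Inv /= hW hS; split => //; last split.
- by rewrite /ip_vertices big_set0 setU0.
- by move=> a; rewrite exposed0 in_set0.
- split => //; split; first by move=> [|i] [|j].
  by move=> [|i] //= _; apply/set0Pn; exists x; rewrite inE.
- move=> B; apply/imsetP/idP => [[v _ ->]|].
    case: (eqVneq v x) => [->|hv]; first by rewrite inE eqxx.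
    by apply/orP; right; apply/existsP; exists v; rewrite inE hv eqxx.
  case/orP => [|/existsP [v /andP [_ /eqP ->]]]; last by exists v.
  by rewrite inE => /eqP ->; exists x.
- exists [::]; split => //.
  by exists 0%R => b _; rewrite subr0.
- by [].
Qed.


Lemma orevK (a : oedge E) : orev (orev a) = a.
Proof. by case: a => e b; rewrite /orev /= negbK. Qed.

Lemma nth_WP P j : (j < size P)%N -> nth set0 P j \subset WP P.
Proof. by move=> hj; apply/subsetP => v hv; apply: (inWP_mem (mem_nth set0 hj) hv). Qed.

Lemma disjP (A B : {set V}) : (forall u, u \in A -> u \in B -> False) -> [disjoint A & B].
Proof.
move=> h; rewrite -setI_eq0; apply/eqP/setP => u; rewrite !inE.
by apply/negP => /andP [h1 h2]; apply: (h u h1 h2).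
Qed.

Lemma Pok_rcons Q B : Pok Q -> B != set0 -> [disjoint B & WP Q] -> Pok (rcons Q B).
Proof.
move=> [hd hne] hB hdis; split.
- move=> i j; rewrite size_rcons !ltnS [(i <= _)%N]leq_eqVlt [(j <= _)%N]leq_eqVlt.
  case/orP=> [/eqP ei|hi]; case/orP=> [/eqP ej|hj] hij.
  + by rewrite ei ej eqxx in hij.
  + rewrite !nth_rcons hj ei ltnn eqxx.
    by apply: disjointWr hdis; apply: nth_WP.
  + rewrite !nth_rcons hi ej ltnn eqxx.
    by rewrite disjoint_sym; apply: disjointWr hdis; apply: nth_WP.
  + by rewrite !nth_rcons hi hj; apply: hd.
- move=> i; rewrite size_rcons ltnS leq_eqVlt; case/orP=> [/eqP ->|hi].
  + by rewrite nth_rcons ltnn eqxx.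
  + by rewrite nth_rcons hi; apply: hne.
Qed.

Lemma Pok_rcons_inv Q B : Pok (rcons Q B) -> [/\ Pok Q, B != set0 & [disjoint B & WP Q]].
Proof.
move=> hP; have [hd hne] := hP.
have hs : forall i, (i < size Q)%N -> (i < size (rcons Q B))%N.
  by move=> i hi; rewrite size_rcons ltnS ltnW.
have hq : (size Q < size (rcons Q B))%N by rewrite size_rcons.
split.
- split.
  + move=> i j hi hj hij; have := hd i j (hs i hi) (hs j hj) hij.
    by rewrite !nth_rcons hi hj.
  + by move=> i hi; have := hne i (hs i hi); rewrite nth_rcons hi.
- by have := hne _ hq; rewrite nth_rcons ltnn eqxx.
- apply: disjP => u hu /inWP [j hj huj].
  have e1 : u \in nth set0 (rcons Q B) (size Q) by rewrite nth_rcons ltnn eqxx.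
  have e2 : u \in nth set0 (rcons Q B) j by rewrite nth_rcons hj.
  have := Pok_same hP hq (hs j hj) e1 e2 => ej.
  by rewrite ej ltnn in hj.
Qed.

Lemma rev_last_in P es ex w l : Pok P -> ESok P es ex w -> size es = l.+1 ->
  orev (nth e0 es l) \in outB (last set0 P).
Proof.
move=> hP [hse hes _ _] hl.
have hlt : (l < size es)%N by rewrite hl.
have [ht hh _ _ _] := hes l hlt.
have hsP : size P = l.+2 by move: hse; rewrite hl; case: (size P) => //= n <-.
rewrite -nth_last hsP /= in hh *.
rewrite inE ot_rev oh_rev hh /=.
apply/negP => hin.
have := Pok_same hP (_ : (l < size P)%N) (_ : (l.+1 < size P)%N) ht hin.
by rewrite hsP => /(_ (leqW (leqnn _)) (leqnn _)) /eqP; rewrite eqn_leq ltnn andbF.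
Qed.

Lemma a_below P es ex w a : Pok P -> ESok P es ex w ->
  a \in outB (last set0 P) -> (forall b, b \in outB (last set0 P) -> (U a.1 <= U b.1)%R) ->
  forall j, (j < size es)%N -> (U a.1 <= U (nth e0 es j).1)%R.
Proof.
move=> hP hE ha hmin j hj.
have [l hl] : exists l, size es = l.+1 by exists (size es).-1; rewrite prednK // (leq_ltn_trans _ hj).
have := hmin _ (rev_last_in hP hE hl); rewrite /= => h1.
have [_ _ hdec _] := hE.
move: hj; rewrite hl ltnS leq_eqVlt => /orP [/eqP ->//|hjl].
by apply: (le_trans h1); apply/ltW; apply: hdec; rewrite // hl.
Qed.

Lemma bnd_o a (W : {set V}) : ot a \in W -> oh a \notin W ->
  ((ends a.1).1 \in W) != ((ends a.1).2 \in W).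
Proof. by case: a => e [] /= -> /negbTE ->. Qed.

Lemma orient f (W : {set V}) : ((ends f).1 \in W) != ((ends f).2 \in W) ->
  exists b, (ot (f, b) \in W) && (oh (f, b) \notin W).
Proof.
case h1: ((ends f).1 \in W); case h2: ((ends f).2 \in W) => //= _.
- by exists true; rewrite /otail /Defs.ohead /= h1 h2.
- by exists false; rewrite /otail /Defs.ohead /= h1 h2.
Qed.

Lemma subsub (y z c : R) : ((y - c) - (z - c) = y - z)%R.
Proof. by rewrite opprB addrA subrK. Qed.

Lemma inSbar t b : b \in expo t -> b.1 \in Sb t.
Proof. by case: b => e [] h; rewrite /Sbar inE h ?orbT. Qed.


Lemma disjF (A B : {set V}) u : [disjoint A & B] -> u \in A -> u \in B -> False.
Proof. by move=> h hA hB; move: (disjointFl h hB); rewrite hA. Qed.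

Lemma invasionS k : invasion ends U x k.+1 =
  obind (fun T => omap (fun e => e |: T) (ip_next ends U x T)) (invasion ends U x k).
Proof. by []. Qed.

Lemma Inv_step t s a s' : Inv s t -> run t = Some s -> cleb_step ends bd s = Some (a, s') ->
  Inv s' t.+1.
Proof.
move=> [I1 I2 I3 [hP0 I4] [I5 [es hES] I7]] hr hs.
have [hrev hr'] := run_step hr hs.
have hES' := hES; case: hES' => hse hes hdec [c hc].
have [hst ha hmin hw' hcase] := step_spec hc hs.
rewrite /Inv (countS t) (exposedS hrev) (SbarS hrev).
move: hcase hw' ha hmin hc I2 I3 I5 I7 hES hes hse hdec hP0 I4.
set P := cs_path s; set W := WP P.
move=> hcase hw' ha hmin hc I2 I3 I5 I7 hES hes hse hdec hP0 I4.
set m := (size P).-1.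
have hm : size P = m.+1 by rewrite /m prednK.
have hlast : last set0 P = nth set0 P m by rewrite -nth_last.
have hmP : (m < size P)%N by rewrite hm.
have hta : ot a \in nth set0 P m by move: ha; rewrite hlast inE => /andP[].
have hhm : oh a \notin nth set0 P m by move: ha; rewrite hlast inE => /andP[].
have htaW : ot a \in W by apply: inWP_mem (mem_nth set0 hmP) hta.
have notlast : forall b, ot b \notin nth set0 P m -> (b \in outB (last set0 P)) = false.
  by move=> b hb; apply/negP; rewrite hlast inE => /andP [h _]; move: hb; rewrite h.
case: (boolP (oh a \in W)) => hv.
-
  case/inWP: hv => i hi hai.
  have [hsz ha_eq] := back_edge I4 hES ha hmin hi hai.
  have hi1 : (i.+1 < size P)%N by rewrite hsz.
  have hmi : m = i.+1 by rewrite /m hsz.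
  set B1 := nth set0 P i; set B2 := nth set0 P i.+1.
  have hdo : drop i.+2 P = [::] by rewrite drop_oversize ?hsz.
  have hPe : P = take i P ++ [:: B1; B2].
    by rewrite -{1}(cat_take_drop i P) (drop_nth set0 hi) (drop_nth set0 hi1) hdo.
  set Q := take i P.
  have hsQ : size Q = i by rewrite size_take hi.
  have huniq := Pok_uniq I4.
  have hB1P : B1 \in P := mem_nth set0 hi.
  have hidx : index B1 P = i := index_uniq set0 hi huniq.
  have hie : (i < size es)%N by rewrite hse -/m hmi.
  have [_ _ hexp _ hwi] := hes i hie.
  have hH : pblock (cs_blocks s) (oh a) = B1.
    apply: pblock_char => //; first by rewrite I5 hB1P.
    move=> B'; rewrite I5 => /orP [hB'|/existsP [u /andP [hu /eqP ->]]] hvB'.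
      have hk : (index B' P < size P)%N by rewrite index_mem.
      have ekB : B' = nth set0 P (index B' P) by rewrite nth_index.
      rewrite ekB in hvB' *; by rewrite (Pok_same I4 hk hi hvB' hai).
    rewrite in_set1 in hvB'; move: hu; rewrite -(eqP hvB') => hu.
    by move: hu; rewrite (inWP_mem hB1P hai).
  move: hcase; cbv zeta; rewrite hH hB1P hidx (drop_nth set0 hi) (drop_nth set0 hi1) hdo.
  rewrite !big_cons big_nil setU0 -/Q => -[hb' hp' _].
  set vC := B1 :|: B2.
  have hWe : WP (cs_path s') = W.
    rewrite hp' /W [in RHS]hPe; apply/setP => u; rewrite !inE has_rcons has_cat /= orbF.
    rewrite in_setU; by case: has; case: (u \in B1); case: (u \in B2).
  have ht0 : t != 0%N by apply: contraTneq hexp => ->; rewrite exposed0 in_set0.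
  have htau : tau t.+1 = false.
    by rewrite /tau_time /is_new hrev -pred_Sn ha_eq orevK hexp andbF orbF eqSS (negbTE ht0).
  have hSb : a.1 |: Sb t = Sb t.
    by apply/setUidPr; rewrite sub1set ha_eq /=; exact: inSbar hexp.
  cbv zeta; rewrite htau addn0 hSb hWe; split => //.
  + move=> b; rewrite in_setU1 => /orP [/eqP ->|/I3 //].
    by rewrite htaW (inWP_mem hB1P hai).
  + have hPr : P = rcons (rcons Q B1) B2 by rewrite -!cats1 -catA.
    have I4' := I4; rewrite hPr in I4'.
    have [hQ1 hne2 hd2] := Pok_rcons_inv I4'.
    have [hQ hne1 hd1] := Pok_rcons_inv hQ1.
    rewrite hp'; split; first by rewrite size_rcons.
    apply: Pok_rcons => //.
    * by case/set0Pn: hne1 => u hu; apply/set0Pn; exists u; rewrite in_setU hu.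
    * apply: disjP => u; rewrite in_setU => /orP [hu|hu] huQ.
      - exact: disjF hd1 hu huQ.
      - by apply: disjF hd2 hu _; rewrite WP_rcons in_setU huQ.
  + split.
    * move=> B; rewrite hb' hp' in_setU in_setD in_set1 in_set I5 mem_rcons in_cons.
      have hexC : [exists u, (u \notin W) && (B == [set u])] -> B \notin [:: B1; B2].
        case/existsP => u /andP [hu /eqP eB]; apply/negP => hBC; move: hu.
        rewrite (inWP_mem (_ : B \in P) (_ : u \in B)) //; last by rewrite eB in_set1.
        by rewrite hPe mem_cat hBC orbT.
      have hQC : B \in Q -> B \notin [:: B1; B2].
        move=> hBQ; apply/negP => hBC; move: huniq; rewrite hPe cat_uniq => /and3P [_ /hasPn hn _].
        by move: (hn B hBC); rewrite /= hBQ.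
      have -> : (B \in P) = (B \in Q ++ [:: B1; B2]) by rewrite -hPe.
      rewrite mem_cat.
      case: (B =P vC) => [->|_] /=; first by rewrite orbT.
      case hBQ: (B \in Q); first by rewrite (negbTE (hQC hBQ)).
      case hBC: (B \in [:: B1; B2]) => /=.
        by case hex: [exists _, _] => //; move: (hexC hex); rewrite hBC.
      by rewrite orbF.
    * exists (take i es).
      have hste : size (take i es) = i by rewrite size_take hie.
      split.
      - by rewrite hste hp' size_rcons hsQ.
      - move=> j; rewrite hste => hj.
        have hjes : (j < size es)%N by apply: ltn_trans hie.
        have hjP : (j < size P)%N by apply: ltn_trans hi.
        rewrite hp' nth_take // nth_rcons hsQ hj /Q nth_take //.
        have [a1 a2 a3 a4 a5] := hes j hjes; split => //.
        + rewrite nth_rcons size_take hi; case: (ltngtP j.+1 i) => [lt|gt|eq].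
          * by rewrite nth_take.
          * by move: gt; rewrite ltnS leqNgt hj.
          * by rewrite in_setU /B1 -eq a2.
        + by rewrite in_setU1 a3 orbT.
        + move=> b hb; rewrite hw' notlast ?a5 //.
          apply/negP => hbm; have := hb; rewrite inE => /andP [hbj _].
          have := Pok_same I4 hjP hmP hbj hbm => ejm.
          by move: hj; rewrite ejm hmi ltnNge leqnSn.
      - move=> j j' hjj'; rewrite hste => hj'.
        rewrite !nth_take //; last by apply: ltn_trans hj'.
        by apply: hdec => //; apply: ltn_trans hie.
      - exists (U (nth e0 es i).1) => b; rewrite hp' last_rcons inE => /andP [hbt hbh].
        rewrite hw'; case hbl: (b \in outB (last set0 P)).
          by rewrite hc // subsub ha_eq.
        have hb1 : ot b \in B1.
          move: hbt; rewrite in_setU => /orP [//|h2].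
          move: hbh hbl; rewrite in_setU negb_or => /andP [_ h3].
          by rewrite hlast hmi inE h2 h3.
        apply: hwi; rewrite inE hb1 /=.
        by move: hbh; rewrite in_setU negb_or => /andP [].
    * move=> b hb; rewrite hw' notlast ?I7 //.
      by apply: contra hb => h; apply: inWP_mem (mem_nth set0 hmP) h.
-
  set v := oh a.
  have hH : pblock (cs_blocks s) v = [set v].
    apply: pblock_char.
    + by rewrite I5; apply/orP; right; apply/existsP; exists v; rewrite hv eqxx.
    + by rewrite in_set1.
    + move=> B'; rewrite I5 => /orP [hB'|/existsP [u /andP [hu /eqP ->]]] hvB'.
        by move: hv; rewrite (inWP_mem hB' hvB').
      by rewrite in_set1 in hvB'; rewrite (eqP hvB').
  have hHP : [set v] \notin P.
    by apply/negP => h; move: hv; rewrite (inWP_mem h (set11 v)).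
  move: hcase; cbv zeta; rewrite hH (negbTE hHP) => -[hb' hp' _].
  have hnew : orev a \notin expo t.
    by apply/negP => /I3; rewrite ot_rev (negbTE hv).
  have htau : tau t.+1 = true.
    by rewrite /tau_time /is_new hrev -pred_Sn hnew andbT eqSS ltnS lt0n; case: eqP.
  have hbd : a.1 \in ip_boundary ends x (Sb t).
    by rewrite /ip_boundary I2 inE; apply: bnd_o.
  have hbmin : forall f, f \in ip_boundary ends x (Sb t) -> (U a.1 <= U f)%R.
    move=> f; rewrite /ip_boundary I2 inE => /orient [b /andP [hb1 hb2]].
    case/inWP: hb1 => j hj hjb.
    have hbo : (f, b) \in outB (nth set0 P j).
      rewrite inE hjb /=; apply: contra hb2 => h; exact: inWP_mem (mem_nth set0 hj) h.
    case: (eqVneq j m) => [ejm|njm].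
      by have := hmin (f, b); rewrite hlast -ejm => /(_ hbo).
    have hjes : (j < size es)%N by rewrite hse -/m ltn_neqAle njm -ltnS -hm hj.
    have [_ _ _ hjmin _] := hes j hjes.
    exact: le_trans (a_below I4 hES ha hmin hjes) (hjmin _ hbo).
  have hnext : ip_next ends U x (Sb t) = Some a.1.
    rewrite /ip_next; case: pickP => [e /andP [he /forall_inP hem]|/(_ a.1)].
      by congr Some; apply: Uinj; apply/eqP; rewrite eq_le hem // hbmin.
    by rewrite hbd /= => /negP []; apply/forall_inP => f hf; apply: hbmin.
  have esm : size es = m by rewrite hse.
  rewrite htau addn1 hp' hb'; split.
  + by rewrite invasionS I1 /= hnext.
  + rewrite ipv_add I2 ends_o WP_rcons; apply/setP => u; rewrite !in_setU !in_set1.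
    by case: (eqVneq u (ot a)) => [->|_]; rewrite ?htaW ?orbT.
  + move=> b; rewrite WP_rcons in_setU1 => /orP [/eqP ->|/I3 /andP [h1 h2]].
      by rewrite !in_setU htaW !in_set1 /v eqxx !orbT.
    by rewrite !in_setU h1 h2.
  + split; first by rewrite size_rcons.
    apply: Pok_rcons => //; first by apply/set0Pn; exists v; rewrite in_set1.
    by rewrite disjoints1.
  + split.
    * move=> B; rewrite I5 mem_rcons inE WP_rcons; apply/idP/idP.
      - case/orP => [hB|/existsP [u /andP [hu /eqP eB]]]; first by rewrite hB orbT.
        case: (eqVneq u v) => [euv|nuv]; first by rewrite eB euv eqxx.
        apply/orP; right; apply/existsP; exists u.
        by rewrite eB eqxx andbT in_setU in_set1 negb_or hu nuv.
      - case/orP => [/orP [/eqP ->|hB]|/existsP [u /andP [hu /eqP eB]]].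
        + by apply/orP; right; apply/existsP; exists v; rewrite hv eqxx.
        + by rewrite hB.
        + apply/orP; right; apply/existsP; exists u; rewrite eB eqxx andbT.
          by move: hu; rewrite in_setU negb_or => /andP [].
    * exists (rcons es a); split.
      - by rewrite !size_rcons hse hm.
      - move=> j; rewrite size_rcons ltnS leq_eqVlt => /orP [/eqP ej|hj].
        + rewrite ej !nth_rcons esm ltnn eqxx hmP -hm ltnn eqxx.
          split => //.
          * by rewrite in_set1.
          * by rewrite setU11.
          * by move=> b hb; apply: hmin; rewrite hlast.
          * by move=> b hb; rewrite hw' hlast hb hc ?hlast // subsub.
        + have hjP : (j < size P)%N by rewrite hm ltnS ltnW // -esm.
          have hj1 : (j.+1 < size P)%N by rewrite hm ltnS -esm.
          rewrite !nth_rcons hj hjP hj1.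
          have [a1 a2 a3 a4 a5] := hes j hj; split => //.
          * by rewrite in_setU1 a3 orbT.
          * move=> b hb; rewrite hw' notlast ?a5 //.
            apply/negP => hbm; have := hb; rewrite inE => /andP [hbj _].
            have := Pok_same I4 hjP hmP hbj hbm => ejm.
            by rewrite ejm -esm ltnn in hj.
      - move=> j j' hjj'; rewrite size_rcons ltnS leq_eqVlt => /orP [/eqP ej'|hj'].
        + have hj : (j < size es)%N by rewrite -ej'.
          rewrite ej' !nth_rcons ltnn eqxx hj lt_neqAle (a_below I4 hES ha hmin hj) andbT.
          apply/negP => /eqP /Uinj he.
          have [a1 a2 _ _ _] := hes j hj.
          have hj1 : (j.+1 < size P)%N by rewrite hm ltnS -esm.
          have : oh a \in [set (ends a.1).1; (ends a.1).2] by rewrite ends_o !inE eqxx orbT.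
          rewrite he ends_o !inE => /orP [/eqP hx|/eqP hx]; move: hv; rewrite /v hx.
          - by rewrite (inWP_mem (mem_nth set0 (ltnW hj1)) a1).
          - by rewrite (inWP_mem (mem_nth set0 hj1) a2).
        + by rewrite !nth_rcons hj' (ltn_trans hjj' hj'); apply: hdec.
      - exists 0%R => b; rewrite last_rcons inE => /andP [hb _].
        rewrite in_set1 in hb; rewrite hw' notlast ?I7 ?subr0 ?(eqP hb) //.
    * move=> b; rewrite WP_rcons in_setU negb_or => /andP [hb1 hb2].
      rewrite hw' notlast ?I7 //.
      by apply: contra hb1 => h; apply: inWP_mem (mem_nth set0 hmP) h.
Qed.


Lemma Inv_run t s : run t = Some s -> Inv s t.
Proof.
elim: t s => [|t IH] s h.
  by case: h => <-; apply: Inv0.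
have [s0 [a [h0 hst]]] := run_inv h.
exact: Inv_step (IH _ h0) h0 hst.
Qed.

End Proof.

Lemma step_some (R : realFieldType) (V E : finType) (ends : E -> V * V) (bd : V)
  (s : cleb_state R V E) b0 :
  cs_stopped s = false -> b0 \in outB ends (last set0 (cs_path s)) ->
  exists p, cleb_step ends bd s = Some p.
Proof.
move=> hst hb0; rewrite /cleb_step hst -/(outB _ _).
case: (arg_minP (cs_w s) hb0) => a0 ha0' hmin0.
have ha0 : a0 \in outB ends (last set0 (cs_path s)) := ha0'.
case: pickP => [a1 /andP [ha1 _]|/(_ a0)]; last first.
  by rewrite ha0 /=; move/negP; case; apply/forall_inP.
case: pickP => [e _|/(_ a1)]; last by rewrite ha1 subrr eqxx.
by case: ifP => _; eexists.
Qed.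

Lemma gen_inj (R : realFieldType) (E : finType) (U : E -> R) : generic U -> injective U.
Proof.
move=> hg e f hef; case: (eqVneq e f) => // nef; exfalso.
pose n : {ffun E -> int} := [ffun g => ((g == e)%:Z - (g == f)%:Z)%R].
have hn : n != 0%R.
  apply/eqP => /ffunP /(_ e); rewrite !ffunE eqxx (negbTE nef) /=.
  by move/eqP; rewrite oner_eq0.
have h1 : forall h, (\sum_i U i *~ (i == h)%:Z = U h)%R.
  move=> h; rewrite (bigD1 h) //= eqxx mulr1z big1 ?addr0 // => g /negbTE ->.
  by rewrite mulr0z.
have hsum : (\sum_g U g *~ n g = U e - U f)%R.
  under eq_bigr => g _ do rewrite ffunE mulrzBr.
  by rewrite sumrB !h1.
by move: (hg n hn); rewrite hsum hef subrr eqxx.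
Qed.

Lemma rev_run (R : realFieldType) (V E : finType) (ends : E -> V * V) (U : E -> R) (bd x : V) t a :
  revealed ends U bd x t.+1 = Some a -> exists s, cleb_run ends U bd x t.+1 = Some s.
Proof.
rewrite /revealed [cleb_run _ _ _ _ t.+1]/=.
case: (cleb_run ends U bd x t) => [s0|] //=.
by case: (cleb_step ends bd s0) => [[a' s1]|] //= _; exists s1.
Qed.

Local Open Scope ring_scope.

Theorem mainTheorem8 (R : realFieldType) (V E : finType) (ends : E -> V * V)
    (U : E -> R) (bd x : V) :
  no_self_loops ends -> connected_graph ends ->
  (forall e, 0 <= U e) -> generic U -> x != bd ->
  forall k t : nat, tau_at ends U bd x k t ->
    invasion ends U x k = Some (Sbar ends U bd x t).
Proof.
move=> hnl hconn _ hgen hxbd k t /andP [htau /eqP hk].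
have Uinj := gen_inj hgen.
have [a1 ha1] : exists a1, a1 \in outB ends [set x].
  have /connectP [p hp hl] := hconn x bd.
  case: p hp hl => [_ hl|y p /= /andP [hxy _] _]; first by rewrite hl eqxx in hxbd.
  case/existsP: hxy => e /orP [/eqP he|/eqP he]; have := hnl e; rewrite he /= => h.
  - by exists (e, true); rewrite inE /otail /Defs.ohead /= he /= !in_set1 eqxx eq_sym h.
  - by exists (e, false); rewrite inE /otail /Defs.ohead /= he /= !in_set1 eqxx h.
have [s hs] : exists s, cleb_run ends U bd x t = Some s.
  case: t htau hk => [|[|t]] htau hk.
  - by move: htau; rewrite /tau_time.
  - have [[a' s'] hp] := step_some bd (s := cleb_init U x) (erefl false) ha1.
    by exists s'; rewrite /= hp.
  - move: htau; rewrite /tau_time /= /is_new.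
    case hrv: (revealed ends U bd x t.+2) => [a|] //= _.
    exact: rev_run hrv.
by have [I1 _ _ _ _] := Inv_run a1 Uinj hs; rewrite -hk.
Qed.
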